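(* If $g,h,gh\in\mathcal{G}$ ($g$ and $h$ are composable) then $$\mathrm{rot}(\Delta_g) = \Delta_g: H_g \to H_g \diamond H_g,$$ $$\mathrm{rot}(m_{g,h}) = \bar S_{\bar g} \circ m_{h,\bar h \bar g} \circ (\mathrm{id}_g \diamond S_{gh}) : H_h \diamond H_{gh} \to H_g.$$
   Context: Let $\mathcal{G}$ be a groupoid and $\mathcal{H}(\mathcal{G})$ the free braided monoidal category (product $\diamond$, unit $\mathbf{1}$, braiding $\gamma$) generated by a Hopf $\mathcal{G}$-algebra $H=\{H_g\}_{g\in\mathcal{G}}$ (comultiplications $\Delta_g:H_g\to H_g\diamond H_g$, counits $\epsilon_g$, multiplications $m_{g,h}:H_g\diamond H_h\to H_{gh}$, units $\eta_i$, antipodes $S_g:H_g\to H_{\bar g}$ with inverses $\bar S_g$) with a left cointegral $l=\{l_i:H_{1_i}\to\mathbf{1}\}$ and a right integral $L=\{L_g:\mathbf{1}\to H_g\}$ such that $l_i\circ L_{1_i}=\mathrm{id}_{\mathbf{1}}=l_i\circ S_{1_i}\circ L_{1_i}$. $\mathcal{H}(\mathcal{G})$ is autonomous with $H_g^\ast=H_g$, coform $\Lambda_g=\Delta_g\circ L_g:\mathbf{1}\to H_g\diamond H_g$ and form $\lambda_g=l_i\circ m_{g,\bar g}\circ(\mathrm{id}_g\diamond S_g):H_g\diamond H_g\to\mathbf{1}$ for $g\in\mathcal{G}(i,j)$. Writing $\mathrm{Mor}(A,B)$ for the morphisms $A\to B$ in $\mathcal{H}(\mathcal{G})$, the rotation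 map $\mathrm{rot}:\mathrm{Mor}(H_g\diamond A,B\diamond H_h)\to\mathrm{Mor}(A\diamond H_h,H_g\diamond B)$ is defined by $$\mathrm{rot}(F)=(\mathrm{id}_{H_g\diamond B}\diamond\lambda_h)\circ(\mathrm{id}_g\diamond F\diamond\mathrm{id}_h)\circ(\Lambda_g\diamond\mathrm{id}_{A\diamond H_h}).$$ Here $\Delta_g$ is regarded as a morphism $H_g\diamond\mathbf{1}\to H_g\diamond H_g$ and $m_{g,h}$ as a morphism $H_g\diamond H_h\to\mathbf{1}\diamond H_{gh}$. *)

(* Defs.v *)
(* Encoding of the free braided monoidal category H(G) generated
   by a Hopf G-algebra with integrals: an equation between morphisms holds in the
   free category iff it holds in every strict braided monoidal category equipped
   with such a structure.  We use strict braided monoidal categories whose object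
   monoid is the free monoid (lists, concatenation) on the generators H_g, g in G
   (the free category H(G) is of this form). *)
From Stdlib Require Import List.
Import ListNotations.

(* ---------- Groupoids (diagrammatic composition: gcomp g h = "gh") ---------- *)
Record Groupoid : Type := {
  gob : Type;
  ghom : gob -> gob -> Type;
  gid : forall i, ghom i i;
  gcomp : forall i j k, ghom i j -> ghom j k -> ghom i k;
  ginv : forall i j, ghom i j -> ghom j i;
  gassoc : forall i j k l (f : ghom i j) (g : ghom j k) (h : ghom k l),
      gcomp _ _ _ (gcomp _ _ _ f g) h = gcomp _ _ _ f (gcomp _ _ _ g h);
  gidl : forall i j (f : ghom i j), gcomp _ _ _ (gid i) f = f;
  gidr : forall i j (f : ghom i j), gcomp _ _ _ f (gid j) = f;
  ginvr : forall i j (f : ghom i j), gcomp _ _ _ f (ginv _ _ f) = gid i;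
  ginvl : forall i j (f : ghom i j), gcomp _ _ _ (ginv _ _ f) f = gid j
}.
Arguments ghom G i j : rename.
Arguments gid {G} i : rename.
Arguments gcomp {G i j k} _ _ : rename.
Arguments ginv {G i j} _ : rename.
Arguments gassoc G {i j k l} f g h : rename.
Arguments gidl G {i j} f : rename.
Arguments gidr G {i j} f : rename.
Arguments ginvr G {i j} f : rename.
Arguments ginvl G {i j} f : rename.

Lemma ginv_id (G : Groupoid) (i : gob G) : ginv (gid i) = gid i.
Proof.
  rewrite <- (gidl G (ginv (gid i))). apply ginvr.
Qed.

Lemma ginv_comp (G : Groupoid) (i j k : gob G) (g : ghom G i j) (h : ghom G j k) :
  ginv (gcomp g h) = gcomp (ginv h) (ginv g).
Proof.
  assert (E : gcomp (gcomp g h) (gcomp (ginv h) (ginv g)) = gid i).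
  { rewrite gassoc, <- (gassoc G h), ginvr, gidl, ginvr. reflexivity. }
  rewrite <- (gidr G (ginv (gcomp g h))), <- E, <- gassoc, ginvl, gidl.
  reflexivity.
Qed.

Lemma gcomp_cancel (G : Groupoid) (i j k : gob G) (g : ghom G i j) (h : ghom G j k) :
  gcomp h (gcomp (ginv h) (ginv g)) = ginv g.
Proof. rewrite <- gassoc, ginvr, gidl. reflexivity. Qed.

Definition gen (G : Groupoid) : Type :=
  { p : gob G * gob G & ghom G (fst p) (snd p) }.
Definition Hob {G : Groupoid} {i j : gob G} (g : ghom G i j) : list (gen G) :=
  [existT (fun p : gob G * gob G => ghom G (fst p) (snd p)) (i, j) g].

(* transparent list identities (so that casts compute on concrete lists) *)
Fixpoint app_nil_rT {X : Type} (l : list X) : l ++ [] = l :=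
  match l as l0 return l0 ++ [] = l0 with
  | [] => eq_refl
  | x :: l' => f_equal (cons x) (app_nil_rT l')
  end.
Fixpoint app_assocT {X : Type} (a b c : list X) : a ++ (b ++ c) = (a ++ b) ++ c :=
  match a as a0 return a0 ++ (b ++ c) = (a0 ++ b) ++ c with
  | [] => eq_refl
  | x :: a' => f_equal (cons x) (app_assocT a' b c)
  end.

Record BCat (X : Type) : Type := {
  Mor : list X -> list X -> Type;
  comp : forall a b c, Mor b c -> Mor a b -> Mor a c;   (* comp f g = f o g *)
  idm : forall a, Mor a a;
  tens : forall a b c d, Mor a b -> Mor c d -> Mor (a ++ c) (b ++ d);
  braid : forall a b, Mor (a ++ b) (b ++ a)
}.
Arguments Mor {X} _ _ _.
Arguments comp {X} _ {a b c} _ _.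
Arguments idm {X} _ _.
Arguments tens {X} _ {a b c d} _ _.
Arguments braid {X} _ _ _.

Definition castm {X : Type} (C : BCat X) {A A' B B' : list X}
  (e1 : A = A') (e2 : B = B') (f : Mor C A B) : Mor C A' B' :=
  match e1 in _ = A0 return Mor C A0 B' with
  | eq_refl => match e2 in _ = B0 return Mor C A B0 with eq_refl => f end
  end.

Record IsBraidedStrict {X : Type} (C : BCat X) : Prop := {
  comp_assoc : forall A B D E (f : Mor C D E) (g : Mor C B D) (h : Mor C A B),
      comp C f (comp C g h) = comp C (comp C f g) h;
  comp_idl : forall A B (f : Mor C A B), comp C (idm C B) f = f;
  comp_idr : forall A B (f : Mor C A B), comp C f (idm C A) = f;
  tens_id : forall A B, tens C (idm C A) (idm C B) = idm C (A ++ B);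
  tens_comp : forall A B D A' B' D' (f : Mor C B D) (f' : Mor C A B)
      (g : Mor C B' D') (g' : Mor C A' B'),
      tens C (comp C f f') (comp C g g') = comp C (tens C f g) (tens C f' g');
  tens_assoc : forall A B A' B' A'' B'' (f : Mor C A B) (g : Mor C A' B')
      (h : Mor C A'' B''),
      tens C (tens C f g) h
      = castm C (app_assocT A A' A'') (app_assocT B B' B'') (tens C f (tens C g h));
  tens_unitl : forall A B (f : Mor C A B), tens C (idm C []) f = f;
  tens_unitr : forall A B (f : Mor C A B),
      tens C f (idm C []) = castm C (eq_sym (app_nil_rT A)) (eq_sym (app_nil_rT B)) f;
  braid_nat : forall A B A' B' (f : Mor C A B) (g : Mor C A' B'),
      comp C (braid C B B') (tens C f g) = comp C (tens C g f) (braid C A A');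
  braid_iso : forall A B, exists b : Mor C (B ++ A) (A ++ B),
      comp C (braid C A B) b = idm C (B ++ A) /\ comp C b (braid C A B) = idm C (A ++ B);
  hexagon1 : forall A B D,
      braid C A (B ++ D)
      = comp C (castm C eq_refl (app_assocT B D A) (tens C (idm C B) (braid C A D)))
               (castm C (eq_sym (app_assocT A B D)) (eq_sym (app_assocT B A D))
                        (tens C (braid C A B) (idm C D)));
  hexagon2 : forall A B D,
      braid C (A ++ B) D
      = comp C (castm C eq_refl (eq_sym (app_assocT D A B)) (tens C (braid C A D) (idm C B)))
               (castm C (app_assocT A B D) (app_assocT A D B)
                        (tens C (idm C A) (braid C B D)))
}.

Definition hcast {G : Groupoid} (C : BCat (gen G)) {i j : gob G} {g g' : ghom G i j}
  (e : g = g') : Mor C (Hob g) (Hob g') :=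
  match e in _ = y return Mor C (Hob g) (Hob y) with eq_refl => idm C (Hob g) end.

Record HopfGAlg {G : Groupoid} (C : BCat (gen G)) : Type := {
  Delta : forall i j (g : ghom G i j), Mor C (Hob g) (Hob g ++ Hob g);
  eps : forall i j (g : ghom G i j), Mor C (Hob g) [];
  mul : forall i j k (g : ghom G i j) (h : ghom G j k),
      Mor C (Hob g ++ Hob h) (Hob (gcomp g h));
  eta : forall i, Mor C [] (Hob (gid i));
  ant : forall i j (g : ghom G i j), Mor C (Hob g) (Hob (ginv g));
  antinv : forall i j (g : ghom G i j), Mor C (Hob (ginv g)) (Hob g);
  mul_assoc : forall i j k l (g : ghom G i j) (h : ghom G j k) (f : ghom G k l),
      comp C (mul _ _ _ (gcomp g h) f) (tens C (mul _ _ _ g h) (idm C (Hob f)))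
      = comp C (hcast C (eq_sym (gassoc G g h f)))
          (comp C (mul _ _ _ g (gcomp h f)) (tens C (idm C (Hob g)) (mul _ _ _ h f)));
  mul_unitl : forall i j (g : ghom G i j),
      comp C (hcast C (gidl G g))
        (comp C (mul _ _ _ (gid i) g) (tens C (eta i) (idm C (Hob g)))) = idm C (Hob g);
  mul_unitr : forall i j (g : ghom G i j),
      comp C (hcast C (gidr G g))
        (comp C (mul _ _ _ g (gid j)) (tens C (idm C (Hob g)) (eta j))) = idm C (Hob g);
  coassoc : forall i j (g : ghom G i j),
      comp C (tens C (Delta _ _ g) (idm C (Hob g))) (Delta _ _ g)
      = comp C (tens C (idm C (Hob g)) (Delta _ _ g)) (Delta _ _ g);
  counitl : forall i j (g : ghom G i j),
      comp C (tens C (eps _ _ g) (idm C (Hob g))) (Delta _ _ g) = idm C (Hob g);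
  counitr : forall i j (g : ghom G i j),
      comp C (tens C (idm C (Hob g)) (eps _ _ g)) (Delta _ _ g) = idm C (Hob g);
  bialg_mul : forall i j k (g : ghom G i j) (h : ghom G j k),
      comp C (Delta _ _ (gcomp g h)) (mul _ _ _ g h)
      = comp C (tens C (mul _ _ _ g h) (mul _ _ _ g h))
          (comp C (tens C (tens C (idm C (Hob g)) (braid C (Hob g) (Hob h))) (idm C (Hob h)))
                  (tens C (Delta _ _ g) (Delta _ _ h)));
  bialg_eps : forall i j k (g : ghom G i j) (h : ghom G j k),
      comp C (eps _ _ (gcomp g h)) (mul _ _ _ g h) = tens C (eps _ _ g) (eps _ _ h);
  bialg_unit : forall i, comp C (Delta _ _ (gid i)) (eta i) = tens C (eta i) (eta i);
  bialg_counit : forall i, comp C (eps _ _ (gid i)) (eta i) = idm C [];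
  antipode_r : forall i j (g : ghom G i j),
      comp C (hcast C (ginvr G g))
        (comp C (mul _ _ _ g (ginv g)) (comp C (tens C (idm C (Hob g)) (ant _ _ g)) (Delta _ _ g)))
      = comp C (eta i) (eps _ _ g);
  antipode_l : forall i j (g : ghom G i j),
      comp C (hcast C (ginvl G g))
        (comp C (mul _ _ _ (ginv g) g) (comp C (tens C (ant _ _ g) (idm C (Hob g))) (Delta _ _ g)))
      = comp C (eta j) (eps _ _ g);
  antinv_l : forall i j (g : ghom G i j), comp C (antinv _ _ g) (ant _ _ g) = idm C (Hob g);
  antinv_r : forall i j (g : ghom G i j),
      comp C (ant _ _ g) (antinv _ _ g) = idm C (Hob (ginv g))
}.
Arguments Delta {G C} _ {i j} g.
Arguments eps {G C} _ {i j} g.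
Arguments mul {G C} _ {i j k} g h.
Arguments eta {G C} _ i.
Arguments ant {G C} _ {i j} g.
Arguments antinv {G C} _ {i j} g.

Definition is_left_cointegral {G : Groupoid} {C : BCat (gen G)} (HA : HopfGAlg C)
  (l : forall i : gob G, Mor C (Hob (gid i)) []) : Prop :=
  forall i, comp C (tens C (idm C (Hob (gid i))) (l i)) (Delta HA (gid i))
            = comp C (eta HA i) (l i).

Definition is_right_integral {G : Groupoid} {C : BCat (gen G)} (HA : HopfGAlg C)
  (L : forall i j (g : ghom G i j), Mor C [] (Hob g)) : Prop :=
  forall i j k (g : ghom G i j) (h : ghom G j k),
    comp C (mul HA g h) (tens C (L _ _ g) (idm C (Hob h)))
    = tens C (L _ _ (gcomp g h)) (eps HA h).

Definition coform {G : Groupoid} {C : BCat (gen G)} (HA : HopfGAlg C)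
  (L : forall i j (g : ghom G i j), Mor C [] (Hob g)) {i j} (g : ghom G i j)
  : Mor C [] (Hob g ++ Hob g) :=
  comp C (Delta HA g) (L _ _ g).

Definition form {G : Groupoid} {C : BCat (gen G)} (HA : HopfGAlg C)
  (l : forall i : gob G, Mor C (Hob (gid i)) []) {i j} (g : ghom G i j)
  : Mor C (Hob g ++ Hob g) [] :=
  comp C (l i) (comp C (hcast C (ginvr G g))
                  (comp C (mul HA g (ginv g)) (tens C (idm C (Hob g)) (ant HA g)))).

Definition rot {G : Groupoid} {C : BCat (gen G)} (HA : HopfGAlg C)
  (l : forall i : gob G, Mor C (Hob (gid i)) [])
  (L : forall i j (g : ghom G i j), Mor C [] (Hob g))
  {i j k m : gob G} (g : ghom G i j) (h : ghom G k m) (A B : list (gen G))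
  (F : Mor C (Hob g ++ A) (B ++ Hob h)) : Mor C (A ++ Hob h) (Hob g ++ B) :=
  comp C
    (castm C (f_equal (cons (existT (fun p : gob G * gob G => ghom G (fst p) (snd p)) (i, j) g))
                       (app_assocT B (Hob h) (Hob h)))
             (app_nil_rT (Hob g ++ B))
             (tens C (idm C (Hob g ++ B)) (form HA l h)))
    (comp C (tens C (tens C (idm C (Hob g)) F) (idm C (Hob h)))
            (tens C (coform HA L g) (idm C (A ++ Hob h)))).

(* Main.v *)
Require Import Defs.
From Stdlib Require Import List ssreflect ProofIrrelevance Eqdep.
Import ListNotations.

Ltac sg := match goal with |- ?G => idtac G end.
Set Printing Width 200.
Section S.
Context (G : Groupoid) (C : BCat (gen G)) (HC : IsBraidedStrict C) (HA : HopfGAlg C).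

Local Notation "f ∘ g" := (comp C f g) (at level 40, left associativity).
Local Notation "f ⊗ g" := (tens C f g) (at level 35).
Local Notation "1[ A ]" := (idm C A).

Lemma castm_refl A B (e1 : A = A) (e2 : B = B) (f : Mor C A B) : castm C e1 e2 f = f.
Proof. rewrite (UIP_refl _ _ e1) (UIP_refl _ _ e2). reflexivity. Qed.

Lemma cA A B D E (f : Mor C D E) (g : Mor C B D) (h : Mor C A B) : f ∘ (g ∘ h) = f ∘ g ∘ h.
Proof. apply (comp_assoc _ HC). Qed.
Lemma cIl A B (f : Mor C A B) : 1[B] ∘ f = f. Proof. apply (comp_idl _ HC). Qed.
Lemma cIr A B (f : Mor C A B) : f ∘ 1[A] = f. Proof. apply (comp_idr _ HC). Qed.
Lemma tI A B : 1[A] ⊗ 1[B] = 1[A ++ B]. Proof. apply (tens_id _ HC). Qed.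
Lemma tC A B D A' B' D' (f : Mor C B D) (f' : Mor C A B) (g : Mor C B' D') (g' : Mor C A' B') :
  (f ∘ f') ⊗ (g ∘ g') = (f ⊗ g) ∘ (f' ⊗ g').
Proof. apply (tens_comp _ HC). Qed.
Lemma tUl A B (f : Mor C A B) : 1[[]] ⊗ f = f. Proof. apply (tens_unitl _ HC). Qed.

Lemma xchL A B A' B' (f : Mor C A B) (g : Mor C A' B') : f ⊗ g = (f ⊗ 1[B']) ∘ (1[A] ⊗ g).
Proof. by rewrite -tC cIl cIr. Qed.
Lemma xchR A B A' B' (f : Mor C A B) (g : Mor C A' B') : f ⊗ g = (1[B] ⊗ g) ∘ (f ⊗ 1[A']).
Proof. by rewrite -tC cIl cIr. Qed.
Lemma tCl A B D A' (f : Mor C B D) (f' : Mor C A B) : (f ∘ f') ⊗ 1[A'] = (f ⊗ 1[A']) ∘ (f' ⊗ 1[A']).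
Proof. by rewrite -tC cIl. Qed.
Lemma tCr A B D A' (f : Mor C B D) (f' : Mor C A B) : 1[A'] ⊗ (f ∘ f') = (1[A'] ⊗ f) ∘ (1[A'] ⊗ f').
Proof. by rewrite -tC cIl. Qed.

Lemma hc_irr i j (a b : ghom G i j) (e e' : a = b) : hcast C e = hcast C e'.
Proof. by rewrite (proof_irrelevance _ e e'). Qed.
Lemma hc_comp i j (a b c : ghom G i j) (e1 : a = b) (e2 : b = c) :
  hcast C e2 ∘ hcast C e1 = hcast C (eq_trans e1 e2).
Proof. destruct e2. simpl. apply cIl. Qed.
Lemma hc_refl i j (a : ghom G i j) (e : a = a) : hcast C e = 1[Hob a].
Proof. by rewrite (proof_irrelevance _ e eq_refl). Qed.

Lemma Delta_hc i j (a b : ghom G i j) (e : a = b) :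
  Delta HA b ∘ hcast C e = (hcast C e ⊗ hcast C e) ∘ Delta HA a.
Proof. destruct e. simpl. by rewrite tI cIl cIr. Qed.
Lemma eps_hc i j (a b : ghom G i j) (e : a = b) : eps HA b ∘ hcast C e = eps HA a.
Proof. destruct e. simpl. by rewrite cIr. Qed.
Lemma L_hc (L : forall i j (g : ghom G i j), Mor C [] (Hob g)) i j (a b : ghom G i j) (e : a = b) :
  L _ _ b = hcast C e ∘ L _ _ a.
Proof. destruct e. simpl. by rewrite cIl. Qed.
Lemma mul_hcr i j k (a : ghom G i j) (b b' : ghom G j k) (e : b = b') :
  mul HA a b' ∘ (1[Hob a] ⊗ hcast C e) = hcast C (f_equal (gcomp a) e) ∘ mul HA a b.
Proof. destruct e. simpl. by rewrite tI cIl cIr. Qed.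
Lemma mul_hcl i j k (a a' : ghom G i j) (b : ghom G j k) (e : a = a') :
  mul HA a' b ∘ (hcast C e ⊗ 1[Hob b]) = hcast C (f_equal (fun x => gcomp x b) e) ∘ mul HA a b.
Proof. destruct e. simpl. by rewrite tI cIl cIr. Qed.


Arguments cA {A B D E} f g h.
Arguments cIl {A B} f.
Arguments cIr {A B} f.
Arguments tC {A B D A' B' D'} f f' g g'.
Arguments tCl {A B D} A' f f'.
Arguments tCr {A B D} A' f f'.
Arguments xchL {A B A' B'} f g.
Arguments xchR {A B A' B'} f g.

Arguments hc_irr {i j a b} e e'.
Arguments hc_comp {i j a b c} e1 e2.
Arguments hc_refl {i j a} e.
Arguments Delta_hc {i j a b} e.
Arguments eps_hc {i j a b} e.
Arguments L_hc L {i j a b} e.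
Arguments mul_hcr {i j k a b b'} e.
Arguments mul_hcl {i j k a a' b} e.

Lemma l2 {B D E} (a : Mor C D E) (b : Mor C B D) (c : Mor C B E) :
  a ∘ b = c -> forall F (P : Mor C E F), P ∘ a ∘ b = P ∘ c.
Proof. move=> H F P. by rewrite -cA H. Qed.
Lemma l3 {B D E F} (a : Mor C E F) (b : Mor C D E) (c : Mor C B D) (d : Mor C B F) :
  a ∘ b ∘ c = d -> forall K (P : Mor C F K), P ∘ a ∘ b ∘ c = P ∘ d.
Proof. move=> H K P. by rewrite -cA -cA (cA a b c) H. Qed.

Arguments l2 {B D E a b c} H {F} P.
Arguments l3 {B D E F a b c d} H {K} P.

Ltac rw2 E := first [rewrite (l2 E) | rewrite E].
Ltac rw3 E := first [rewrite (l3 E) | rewrite E].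

Lemma swapm {A B A' B'} (f : Mor C A B) (g : Mor C A' B') :
  (1[B] ⊗ g) ∘ (f ⊗ 1[A']) = (f ⊗ 1[B']) ∘ (1[A] ⊗ g).
Proof. by rewrite -xchL -xchR. Qed.


Context (l : forall i : gob G, Mor C (Hob (gid i)) [])
  (L : forall i j (g : ghom G i j), Mor C [] (Hob g))
  (Hl : is_left_cointegral HA l)
  (HL : is_right_integral HA L)
  (HlL : forall i : gob G, comp C (l i) (L _ _ (gid i)) = idm C []).

Lemma massoc {i j k m} (g : ghom G i j) (h : ghom G j k) (f : ghom G k m) :
  mul HA (gcomp g h) f ∘ (mul HA g h ⊗ 1[Hob f])
  = hcast C (eq_sym (gassoc G g h f)) ∘ mul HA g (gcomp h f) ∘ (1[Hob g] ⊗ mul HA h f).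
Proof. by rewrite (mul_assoc _ HA) cA. Qed.

Lemma tIA {A B} (x : gen G) D (f : Mor C A B) :
  1[[x] ++ D] ⊗ f = 1[[x]] ⊗ (1[D] ⊗ f).
Proof. by rewrite -tI (tens_assoc _ HC) castm_refl. Qed.

Lemma munitr {i j} (g : ghom G i j) :
  hcast C (gidr G g) ∘ mul HA g (gid j) ∘ (1[Hob g] ⊗ eta HA j) = 1[Hob g].
Proof. by rewrite -cA (mul_unitr _ HA). Qed.
Lemma munitl {i j} (g : ghom G i j) :
  hcast C (gidl G g) ∘ mul HA (gid i) g ∘ (eta HA i ⊗ 1[Hob g]) = 1[Hob g].
Proof. by rewrite -cA (mul_unitl _ HA). Qed.

Lemma tIAH {A B} {i j} (a : ghom G i j) D (f : Mor C A B) :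
  1[Hob a ++ D] ⊗ f = 1[Hob a] ⊗ (1[D] ⊗ f).
Proof. apply tIA. Qed.

Lemma antip i j (g : ghom G i j) :
  mul HA g (ginv g) ∘ (1[Hob g] ⊗ ant HA g) ∘ Delta HA g = hcast C (eq_sym (ginvr G g)) ∘ eta HA i ∘ eps HA g.
Proof.
  have E := antipode_r _ HA _ _ g.
  rewrite -cA -(cIl (_ ∘ (_ ∘ _))) -(hc_refl (eq_trans (ginvr G g) (eq_sym (ginvr G g)))) -hc_comp.
  by rewrite -!cA E.
Qed.

Lemma Q i j (g : ghom G i j) :
  form HA l g ∘ ((hcast C (gidl G g) ∘ mul HA (gid i) g) ⊗ 1[Hob g]) ∘ (1[Hob (gid i)] ⊗ Delta HA g)
  = l i ⊗ eps HA g.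
Proof.
  rewrite /form !cA.
  rewrite (l2 (swapm _ _)) (tCl _ (hcast _ _)) !cA (l2 (mul_hcl _)) !cA (l2 (massoc _ _ _)) !cA.
  rewrite (tIA _ (Hob g) (ant HA g)) (l2 (eq_sym (tCr _ _ _))) (l2 (eq_sym (tCr _ _ _))).
  rewrite (cA (mul _ _ _)) antip !tCr !cA (l2 (mul_hcr _)) !cA !(l2 (hc_comp _ _)).
  rewrite (hc_irr _ (gidr G (gid i))) (l3 (munitr _)) cIr.
  by rewrite (xchL (l i)) (tens_unitr _ HC) castm_refl.
Qed.

Lemma Bm i j (g : ghom G i j) :
  coform HA L g ∘ eps HA g =
  ((hcast C (gidl G g) ∘ mul HA (gid i) g) ⊗ (hcast C (gidl G g) ∘ mul HA (gid i) g))
  ∘ ((1[Hob (gid i)] ⊗ braid C (Hob (gid i)) (Hob g)) ⊗ 1[Hob g])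
  ∘ ((Delta HA (gid i) ∘ L _ _ (gid i)) ⊗ Delta HA g).
Proof.
  rewrite /coform (L_hc L (gidl G g)).
  have E : L _ _ (gcomp (gid i) g) ⊗ eps HA g = L _ _ (gcomp (gid i) g) ∘ eps HA g.
  { by rewrite xchL tUl (tens_unitr _ HC) castm_refl. }
  rewrite -!cA -E -HL !cA Delta_hc (l2 (bialg_mul _ HA _ _ _ _ _)).
  have E2 : (Delta HA (gid i) ∘ L _ _ (gid i)) ⊗ Delta HA g
     = (Delta HA (gid i) ⊗ Delta HA g) ∘ (L _ _ (gid i) ⊗ 1[Hob g]) by rewrite -tC cIr.
  by rewrite E2 tC !cA.
Qed.

Lemma braid_nil (x : gen G) : braid C [] [x] = 1[[x]].
Proof.
  have H := hexagon2 _ HC [] [] [x].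
  rewrite !castm_refl tUl (tens_unitr _ HC) castm_refl in H.
  have [b [Hb1 Hb2]] := braid_iso _ HC [] [x].
  by rewrite -[LHS]cIr -Hb1 cA -H.
Qed.

Lemma Zig i j (g : ghom G i j) :
  (1[Hob g] ⊗ form HA l g) ∘ (coform HA L g ⊗ 1[Hob g]) = 1[Hob g].
Proof.
  have E :  (1[Hob g] ⊗ form HA l g) ∘ (coform HA L g ⊗ 1[Hob g]) ∘ ((eps HA g ⊗ 1[Hob g]) ∘ Delta HA g) = 1[Hob g].
  2: by rewrite (counitl _ HA) cIr in E.
  have E1 : (coform HA L g ⊗ 1[Hob g]) ∘ (eps HA g ⊗ 1[Hob g]) = (coform HA L g ∘ eps HA g) ⊗ 1[Hob g].
  { by rewrite tCl. }
  rewrite cA (l2 E1) Bm !tCl !cA.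
  rewrite !(tens_assoc _ HC) !castm_refl.
  set HM := hcast C (gidl G g) ∘ mul HA (gid i) g.
  rewrite -(tC (idm C (Hob g)) HM (form HA l g) (HM ⊗ idm C (Hob g))) cIl.
  set γ := braid C (Hob (gid i)) (Hob g).
  set DL := Delta HA (gid i) ∘ L _ _ (gid i). set D := Delta HA g.
  set F := form HA l g ∘ HM ⊗ 1[Hob g].
  rewrite (tens_assoc _ HC _ _ _ _ _ _ 1[Hob (gid i)] (γ ⊗ 1[Hob g]) 1[Hob g]) castm_refl.
  rewrite (tens_assoc _ HC _ _ _ _ _ _ γ 1[Hob g] 1[Hob g]) castm_refl tI.
  rewrite (tens_assoc _ HC _ _ _ _ _ _ DL D 1[Hob g]) castm_refl.
  rewrite (xchL DL (D ⊗ 1[Hob g])) tUl !cA (l2 (coassoc _ HA _ _ g)) !cA.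
  have E3 : (DL ⊗ 1[(Hob g++Hob g)++Hob g]) ∘ (1[Hob g] ⊗ D) = (1[Hob (gid i)++Hob (gid i)] ⊗ (1[Hob g] ⊗ D)) ∘ (DL ⊗ 1[Hob g++Hob g]).
  { transitivity (DL ⊗ (1[Hob g] ⊗ D)).
    - by rewrite (xchL DL (1[Hob g] ⊗ D)) tUl.
    - exact (xchR DL (1[Hob g] ⊗ D)). }
  rewrite (l2 E3).
  have E4 : (1[Hob (gid i)] ⊗ (γ ⊗ 1[Hob g ++ Hob g])) ∘ (1[Hob (gid i) ++ Hob (gid i)] ⊗ (1[Hob g] ⊗ D))
     = (1[Hob (gid i) ++ Hob g] ⊗ (1[Hob (gid i)] ⊗ D)) ∘ (1[Hob (gid i)] ⊗ (γ ⊗ 1[Hob g])).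
  { rewrite tIAH (tIAH (gid i) (Hob g)) -tCr. 
    etransitivity. exact (eq_sym (tCr (Hob (gid i)) (γ ⊗ 1[Hob g ++ Hob g]) (1[Hob (gid i)] ⊗ (1[Hob g] ⊗ D)))).
    f_equal.
    rewrite -(tIAH (gid i) (Hob g) D) -(tIAH g (Hob (gid i)) D).
    rewrite -(xchR γ D). exact (eq_sym (xchL γ D)). }
  rewrite !cA (l2 E4) !cA.
  have E5 : (HM ⊗ F) ∘ (1[Hob (gid i) ++ Hob g] ⊗ (1[Hob (gid i)] ⊗ D)) = HM ⊗ (l i ⊗ eps HA g).
  { by rewrite -tC cIr /F Q. }
  rw2 E5. rewrite ?cA.
  have E6a : HM ⊗ (l i ⊗ eps HA g) = (HM ⊗ l i) ∘ (1[Hob (gid i) ++ Hob g] ⊗ (1[Hob (gid i)] ⊗ eps HA g)).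
  { rewrite -tC cIr. f_equal. by rewrite (xchL (l i)) (tens_unitr _ HC) castm_refl. }
  have E6c : (1[Hob g] ⊗ (1[Hob (gid i)] ⊗ eps HA g)) ∘ (γ ⊗ 1[Hob g])
     = γ ∘ (1[Hob (gid i) ++ Hob g] ⊗ eps HA g).
  { rewrite -(tIAH g (Hob (gid i))).
    etransitivity. exact (eq_sym (xchR γ (eps HA g))).
    by rewrite xchL (tens_unitr _ HC) castm_refl. }
  have E6d : (1[Hob (gid i)] ⊗ (1[Hob (gid i) ++ Hob g] ⊗ eps HA g)) ∘ (DL ⊗ 1[Hob g ++ Hob g])
     = (DL ⊗ 1[Hob g]) ∘ (1[Hob g] ⊗ eps HA g).
  { rewrite (tIAH (gid i) (Hob g)) -(tIA _ (Hob (gid i))).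
    etransitivity. exact (eq_sym (xchR DL (1[Hob g] ⊗ eps HA g))).
    by rewrite xchL tUl. }
  have E6b : (1[Hob (gid i) ++ Hob g] ⊗ (1[Hob (gid i)] ⊗ eps HA g)) ∘ (1[Hob (gid i)] ⊗ (γ ⊗ 1[Hob g]))
     = (1[Hob (gid i)] ⊗ γ) ∘ (1[Hob (gid i)] ⊗ (1[Hob (gid i) ++ Hob g] ⊗ eps HA g)).
  { rewrite tIAH. 
    etransitivity. exact (eq_sym (tCr (Hob (gid i)) (1[Hob g] ⊗ (1[Hob (gid i)] ⊗ eps HA g)) (γ ⊗ 1[Hob g]))).
    by rewrite E6c tCr. }
  rewrite E6a ?cA (l2 E6b) ?cA (l2 E6d) ?cA (l2 (counitr _ HA _ _ g)) cIr.
  have E7a : (1[Hob g] ⊗ l i) ∘ γ = l i ⊗ 1[Hob g].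
  { rewrite /γ -(braid_nat _ HC) braid_nil. apply cIl. }
  have E7b : (1[Hob (gid i)] ⊗ (l i ⊗ 1[Hob g])) ∘ (DL ⊗ 1[Hob g]) = eta HA i ⊗ 1[Hob g].
  { have T := tens_assoc _ HC _ _ _ _ _ _ 1[Hob (gid i)] (l i) 1[Hob g].
    rewrite castm_refl in T. rewrite -T.
    etransitivity. exact (eq_sym (tCl (Hob g) (1[Hob (gid i)] ⊗ l i) DL)).
    f_equal. rewrite /DL cA. rewrite Hl -cA HlL. apply cIr. }
  have E7c : HM ⊗ l i = HM ∘ (1[Hob (gid i)] ⊗ (1[Hob g] ⊗ l i)).
  { by rewrite (xchL HM) (tens_unitr _ HC) castm_refl tIAH. }
  have E7d : (1[Hob (gid i)] ⊗ (1[Hob g] ⊗ l i)) ∘ (1[Hob (gid i)] ⊗ γ) = 1[Hob (gid i)] ⊗ (l i ⊗ 1[Hob g]).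
  { etransitivity. exact (eq_sym (tCr (Hob (gid i)) (1[Hob g] ⊗ l i) γ)). by rewrite E7a. }
  rewrite E7c (l2 E7d) (l2 E7b) /HM. apply munitl.
Qed.

Lemma WS i j (g : ghom G i j) :
  (1[Hob g] ⊗ (l i ∘ hcast C (ginvr G g) ∘ mul HA g (ginv g))) ∘ (coform HA L g ⊗ 1[Hob (ginv g)])
  = antinv HA g.
Proof.
  set W := (1[Hob g] ⊗ (l i ∘ hcast C (ginvr G g) ∘ mul HA g (ginv g))) ∘ (coform HA L g ⊗ 1[Hob (ginv g)]).
  have EZ : W ∘ ant HA g = 1[Hob g].
  { rewrite -(Zig i j g) /W /form -cA.
    have T1 : (coform HA L g ⊗ 1[Hob (ginv g)]) ∘ ant HA g
              = (1[Hob g ++ Hob g] ⊗ ant HA g) ∘ (coform HA L g ⊗ 1[Hob g]).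
    { transitivity (coform HA L g ⊗ ant HA g); [ | exact (xchR (coform HA L g) (ant HA g))].
      symmetry. etransitivity; [exact (xchL (coform HA L g) (ant HA g)) | ]. by rewrite tUl. }
    rewrite T1 cA tIAH !cA [in RHS]tCr. reflexivity. }
  by rewrite -[LHS]cIr -(antinv_r _ HA) cA EZ cIl.
Qed.

Lemma part1 i j (g : ghom G i j) : rot HA l L g g [] (Hob g) (Delta HA g) = Delta HA g.
Proof.
  rewrite /rot castm_refl.
  have E1 : ((1[Hob g] ⊗ Delta HA g) ⊗ 1[Hob g]) ∘ (coform HA L g ⊗ 1[[] ++ Hob g])
          = (Delta HA g ⊗ 1[Hob g ++ Hob g]) ∘ (coform HA L g ⊗ 1[Hob g]).
  { etransitivity. exact (eq_sym (tCl (Hob g) (1[Hob g] ⊗ Delta HA g) (coform HA L g))).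
    rewrite /coform cA -(coassoc _ HA) -cA tCl.
    by rewrite (tens_assoc _ HC _ _ _ _ _ _ (Delta HA g) 1[Hob g] 1[Hob g]) castm_refl tI. }
  have E2 : (1[Hob g ++ Hob g] ⊗ form HA l g) ∘ (Delta HA g ⊗ 1[Hob g ++ Hob g])
          = Delta HA g ∘ (1[Hob g] ⊗ form HA l g).
  { etransitivity. exact (eq_sym (xchR (Delta HA g) (form HA l g))).
    by rewrite xchL (tens_unitr _ HC) castm_refl. }
  by rewrite E1 cA E2 -cA Zig cIr.
Qed.

Lemma stepA i j k (g : ghom G i j) (h : ghom G j k) :
  form HA l (gcomp g h) ∘ (mul HA g h ⊗ 1[Hob (gcomp g h)])
  = (l i ∘ hcast C (ginvr G g) ∘ mul HA g (ginv g)) ∘ (1[Hob g] ⊗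
      (hcast C (gcomp_cancel G i j k g h) ∘ (mul HA h (gcomp (ginv h) (ginv g))
         ∘ (1[Hob h] ⊗ (hcast C (ginv_comp G i j k g h) ∘ ant HA (gcomp g h)))))).
Proof.
  rewrite /form !cA (l2 (swapm _ _)) !cA (l2 (massoc _ _ _)) !cA.
  rewrite tIAH.
  rewrite [in RHS](tCr (Hob h)) [in RHS]cA [in RHS](l2 (mul_hcr _)).
  rewrite [in RHS]tCr [in RHS]tCr !cA (l2 (mul_hcr _)) !(l2 (hc_comp _ _)).
  rewrite !cA [in RHS]tCr !cA (l2 (mul_hcr _)) !cA !(l2 (hc_comp _ _)).
  match goal with |- _ ∘ hcast C ?e1 ∘ _ ∘ _ ∘ _ = _ ∘ hcast C ?e2 ∘ _ ∘ _ ∘ _ => by rewrite (hc_irr e1 e2) end.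
Qed.

Lemma part2 i j k (g : ghom G i j) (h : ghom G j k) :
  rot HA l L g (gcomp g h) (Hob h) [] (mul HA g h)
  = comp C (antinv HA g)
      (comp C (hcast C (gcomp_cancel G i j k g h))
         (comp C (mul HA h (gcomp (ginv h) (ginv g)))
            (tens C (idm C (Hob h))
               (comp C (hcast C (ginv_comp G i j k g h)) (ant HA (gcomp g h)))))).
Proof.
  rewrite /rot castm_refl.
  set T := hcast C (gcomp_cancel G i j k g h) ∘ (mul HA h (gcomp (ginv h) (ginv g))
         ∘ (1[Hob h] ⊗ (hcast C (ginv_comp G i j k g h) ∘ ant HA (gcomp g h)))).
  set X := l i ∘ hcast C (ginvr G g) ∘ mul HA g (ginv g).
  have E1 : (1[Hob g ++ []] ⊗ form HA l (gcomp g h)) ∘ ((1[Hob g] ⊗ mul HA g h) ⊗ 1[Hob (gcomp g h)])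
          = 1[Hob g] ⊗ (X ∘ (1[Hob g] ⊗ T)).
  { rewrite (tens_assoc _ HC _ _ _ _ _ _ 1[Hob g] (mul HA g h) 1[Hob (gcomp g h)]) castm_refl.
    etransitivity. exact (eq_sym (tCr (Hob g) (form HA l (gcomp g h)) (mul HA g h ⊗ 1[Hob (gcomp g h)]))).
    by rewrite stepA. }
  have E2 : (1[Hob g] ⊗ (1[Hob g] ⊗ T)) ∘ (coform HA L g ⊗ 1[Hob h ++ Hob (gcomp g h)])
          = (coform HA L g ⊗ 1[Hob (ginv g)]) ∘ T.
  { rewrite -(tIAH g (Hob g) T).
    etransitivity. exact (eq_sym (xchR (coform HA L g) T)).
    by rewrite xchL tUl. }
  by rewrite cA E1 tCr -cA E2 cA WS.
Qed.
End S.

Theorem lemma5p7 (G : Groupoid) (C : BCat (gen G)) (HC : IsBraidedStrict C)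
  (HA : HopfGAlg C)
  (l : forall i : gob G, Mor C (Hob (gid i)) [])
  (L : forall i j (g : ghom G i j), Mor C [] (Hob g))
  (Hl : is_left_cointegral HA l)
  (HL : is_right_integral HA L)
  (HlL : forall i : gob G, comp C (l i) (L _ _ (gid i)) = idm C [])
  (HlSL : forall i : gob G,
      comp C (l i) (comp C (hcast C (ginv_id G i)) (comp C (ant HA (gid i)) (L _ _ (gid i))))
      = idm C [])
  (i j k : gob G) (g : ghom G i j) (h : ghom G j k) :
  rot HA l L g g [] (Hob g) (Delta HA g) = Delta HA g
  /\
  rot HA l L g (gcomp g h) (Hob h) [] (mul HA g h)
  = comp C (antinv HA g)
      (comp C (hcast C (gcomp_cancel G i j k g h))
         (comp C (mul HA h (gcomp (ginv h) (ginv g)))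
            (tens C (idm C (Hob h))
               (comp C (hcast C (ginv_comp G i j k g h)) (ant HA (gcomp g h)))))).
Proof.
  split.
  - exact (part1 G C HC HA l L Hl HL HlL i j g).
  - exact (part2 G C HC HA l L Hl HL HlL i j k g h).
Qed.
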